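(* The set $V=\{(y,x)\in M:\max_{1\le i\le d}e^{-\lambda_iy/2}|x_i|\le1\}$ is geodesically convex in $(M,g)$.
   Context: Let $d\ge1$, $0<\lambda_1\le\cdots\le\lambda_d$, and $M$ be $\mathbb{R}^{d+1}$ with coordinates $(y,x)=(y,x_1,\dots,x_d)$ and the Riemannian metric $g=dy^2+\sum_{i=1}^d e^{-2\lambda_i y}dx_i^2$. *)

(* Defs.v *)
From Stdlib Require Import Reals.
From Coquelicot Require Import Coquelicot.
Open Scope R_scope.

(* Points of M = R^{d+1} are pairs (y, x) with x : nat -> R; only the
   coordinates x 0, ..., x (d-1) are meaningful (0-based indexing of
   x_1..x_d).  lam i (i < d) stands for lambda_{i+1}. *)

Fixpoint sumR (n : nat) (f : nat -> R) : R :=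
  match n with
  | O => 0
  | S k => sumR k f + f k
  end.

Definition inV (d : nat) (lam : nat -> R) (y : R) (x : nat -> R) : Prop :=
  forall i : nat, (i < d)%nat -> exp (- (lam i) * y / 2) * Rabs (x i) <= 1.

(* A geodesic of g = dy^2 + sum_i e^{-2 lam_i y} dx_i^2 parametrised on [a,b]:
   a C^2 curve t |-> (y t, x_i t) satisfying the geodesic equations
     y''   = - sum_i lam_i e^{-2 lam_i y} (x_i')^2
     x_i'' = 2 lam_i y' x_i'
   (Christoffel symbols of g: Gamma^y_{ii} = lam_i e^{-2 lam_i y},
    Gamma^i_{iy} = Gamma^i_{yi} = - lam_i, all others zero). *)
Definition is_geodesic (d : nat) (lam : nat -> R) (a b : R)
    (y : R -> R) (x : nat -> R -> R) : Prop :=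
  exists (y1 y2 : R -> R) (x1 x2 : nat -> R -> R),
    forall t : R, a <= t <= b ->
      is_derive y t (y1 t) /\ is_derive y1 t (y2 t) /\
      (forall i : nat, (i < d)%nat ->
         is_derive (x i) t (x1 i t) /\ is_derive (x1 i) t (x2 i t) /\
         x2 i t = 2 * lam i * y1 t * x1 i t) /\
      y2 t = - sumR d (fun i => lam i * exp (-2 * lam i * y t) * (x1 i t) ^ 2).

Definition geodesically_convex (d : nat) (lam : nat -> R)
    (S : R -> (nat -> R) -> Prop) : Prop :=
  forall (a b : R) (y : R -> R) (x : nat -> R -> R),
    a <= b -> is_geodesic d lam a b y x ->
    S (y a) (fun i => x i a) -> S (y b) (fun i => x i b) ->
    forall t : R, a <= t <= b -> S (y t) (fun i => x i t).

(* Main.v *)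
Require Import Defs.
From Stdlib Require Import Reals Lra Lia.
From Coquelicot Require Import Coquelicot.
Open Scope R_scope.
Lemma key (a b : R) (g dg w dphi : R -> R) :
 (forall t, a<=t<=b -> is_derive g t (dg t)) ->
 (forall t, a<=t<=b -> 0 < w t) ->
 (forall t, a<=t<=b -> is_derive (fun t => dg t * w t) t (dphi t)) ->
 (forall t, a<=t<=b -> 0 <= dphi t) ->
 g a <= 0 -> g b <= 0 -> forall t, a<=t<=b -> g t <= 0.
Proof.
intros Hg Hw Hp Hd Ha Hb t Ht.
destruct (Rle_lt_dec (g t) 0) as [|Hgt]; [assumption|exfalso].
assert (Hat : a < t). { destruct (Req_dec a t) as [<-|]; [lra|lra]. }
assert (Htb : t < b). { destruct (Req_dec t b) as [->|]; [lra|lra]. }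
assert (Hc : forall u v, a <= u -> v <= b -> u <= v -> forall (f df : R -> R),
  (forall s, a<=s<=b -> is_derive f s (df s)) ->
  exists c, u <= c <= v /\ f v - f u = df c * (v - u)).
{ intros u v Hu Hv Huv f df Hf.
  destruct (MVT_gen f u v df) as [c [Hc1 Hc2]].
  - intros s Hs. apply Hf. rewrite Rmin_left in Hs by lra. rewrite Rmax_right in Hs by lra. lra.
  - intros s Hs. rewrite Rmin_left in Hs by lra. rewrite Rmax_right in Hs by lra.
    apply derivable_continuous_pt. apply ex_derive_Reals_0. exists (df s). apply Hf. lra.
  - exists c. rewrite Rmin_left in Hc1 by lra. rewrite Rmax_right in Hc1 by lra. split; assumption. }
destruct (Hc a t ltac:(lra) ltac:(lra) ltac:(lra) g dg Hg) as [c1 [Hc1 E1]].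
destruct (Hc t b ltac:(lra) ltac:(lra) ltac:(lra) g dg Hg) as [c2 [Hc2 E2]].
assert (P1 : 0 < dg c1).
{ destruct (Rle_lt_dec (dg c1) 0); [|assumption]. exfalso.
  assert (dg c1 * (t - a) <= 0) by (apply Rmult_le_0_r; lra). lra. }
assert (P2 : dg c2 < 0).
{ destruct (Rle_lt_dec 0 (dg c2)); [|assumption]. exfalso.
  assert (0 <= dg c2 * (b - t)) by (apply Rmult_le_pos; lra). lra. }
destruct (Hc c1 c2 ltac:(lra) ltac:(lra) ltac:(lra) (fun t => dg t * w t) dphi Hp) as [c [Hc3 E3]].
assert (0 < dg c1 * w c1) by (apply Rmult_lt_0_compat; [lra| apply Hw; lra]).
assert (dg c2 * w c2 < 0).
{ assert (0 < w c2) by (apply Hw; lra). nra. }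
assert (0 <= dphi c * (c2 - c1)) by (apply Rmult_le_pos; [apply Hd; lra| lra]).
lra.
Qed.
Lemma d_expc (c : R) (y : R -> R) y' t : is_derive y t y' ->
  is_derive (fun t => exp (c * y t)) t (c * y' * exp (c * y t)).
Proof.
intros H. pose proof (is_derive_comp exp (fun t => c * y t) t _ _ (is_derive_exp (c * y t)) (is_derive_scal y t c y' H)) as H2.
simpl in H2. unfold scal in H2; simpl in H2. unfold mult in H2; simpl in H2. exact H2.
Qed.
Lemma d_mul (f g : R -> R) f' g' t : is_derive f t f' -> is_derive g t g' ->
  is_derive (fun t => f t * g t) t (f' * g t + f t * g').
Proof.
intros H1 H2. apply (is_derive_mult f g t f' g' H1 H2). intros; apply Rmult_comm.
Qed.
Lemma d_min (f g : R -> R) f' g' t : is_derive f t f' -> is_derive g t g' ->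
  is_derive (fun t => f t - g t) t (f' - g').
Proof.
intros H1 H2. apply (is_derive_minus f g t f' g' H1 H2).
Qed.
Lemma is_derive_eq (f : R -> R) u l l' : is_derive f u l -> l = l' -> is_derive f u l'.
Proof. intros H ->; exact H. Qed.

Lemma expinv m yv : exp (- m * yv / 2) * exp (m/2*yv) = 1.
Proof. rewrite <- exp_plus. replace (- m * yv / 2 + m / 2 * yv) with 0 by field. apply exp_0. Qed.

Lemma endp m yv xv sg : sg*sg=1 -> exp(-m*yv/2)*Rabs xv <= 1 -> sg*xv - exp(m/2*yv) <= 0.
Proof.
intros Hs H.
assert (Hsg : sg = 1 \/ sg = -1).
{ assert ((sg - 1) * (sg + 1) = 0) by (ring_simplify; lra).
  destruct (Rmult_integral _ _ H0); [left|right]; lra. }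
pose proof (expinv m yv). pose proof (exp_pos (m/2*yv)). pose proof (exp_pos (-m*yv/2)).
assert (Rabs xv <= exp (m/2*yv)).
{ apply (Rmult_le_reg_l (exp (-m*yv/2))); [assumption|]. lra. }
destruct Hsg as [->| ->]; unfold Rabs in *; destruct (Rcase_abs xv); lra.
Qed.

Lemma exp_bound m yv xv : xv <= exp (m/2*yv) -> -xv <= exp (m/2*yv) ->
  exp (- m * yv / 2) * Rabs xv <= 1.
Proof.
intros H1 H2. pose proof (expinv m yv). pose proof (exp_pos (-m*yv/2)).
assert (Rabs xv <= exp (m/2*yv)) by (unfold Rabs; destruct (Rcase_abs xv); lra).
rewrite <- H. apply Rmult_le_compat_l; lra.
Qed.

Lemma sumR_nonneg (n : nat) f : (forall j, (j < n)%nat -> 0 <= f j) -> 0 <= sumR n f.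
Proof.
induction n; intros H; simpl; [lra|].
assert (0 <= f n) by (apply H; lia). assert (0 <= sumR n f) by (apply IHn; intros; apply H; lia). lra.
Qed.

Theorem mainTheorem10 (d : nat) (lam : nat -> R)
  (hd : (1 <= d)%nat)
  (hpos : forall i : nat, (i < d)%nat -> 0 < lam i)
  (hmono : forall i j : nat, (i <= j)%nat -> (j < d)%nat -> lam i <= lam j) :
  geodesically_convex d lam (inV d lam).
Proof.
unfold geodesically_convex, inV.
intros a b y x Hab [y1 [y2 [x1 [x2 H]]]] HA HB t Ht i Hi.
set (m := lam i).
assert (Hm : 0 < m) by (apply hpos; exact Hi).
assert (Hy2 : forall s, a <= s <= b -> y2 s <= 0).
{ intros s Hs. destruct (H s Hs) as [_ [_ [_ E]]]. rewrite E.
  assert (0 <= sumR d (fun i0 => lam i0 * exp (-2 * lam i0 * y s) * x1 i0 s ^ 2)); [|lra].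
  apply sumR_nonneg. intros j Hj. apply Rmult_le_pos; [apply Rmult_le_pos|].
  - left; apply hpos; exact Hj.
  - left; apply exp_pos.
  - apply pow2_ge_0. }
assert (Hs : forall sg : R, sg * sg = 1 ->
   forall u, a <= u <= b -> sg * x i u - exp (m/2 * y u) <= 0).
{ intros sg Hsg.
  apply (key a b (fun u => sg * x i u - exp (m/2 * y u))
    (fun u => sg * x1 i u - m/2 * y1 u * exp (m/2 * y u))
    (fun u => exp (-2*m * y u))
    (fun u => exp (-2*m*y u) * exp (m/2 * y u) * (3/4*m^2*y1 u^2 - m/2 * y2 u))).
  - intros u Hu. destruct (H u Hu) as [Dy [Dy1 [Dx _]]]. destruct (Dx i Hi) as [Dxi _].
    apply d_min; [apply is_derive_scal; exact Dxi| apply d_expc; exact Dy].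
  - intros; apply exp_pos.
  - intros u Hu. destruct (H u Hu) as [Dy [Dy1 [Dx _]]]. destruct (Dx i Hi) as [Dxi [Dx1i Ex]].
    pose proof (d_mul _ _ _ _ u (d_min _ _ _ _ u (is_derive_scal _ _ sg _ Dx1i)
       (d_mul _ _ _ _ u (is_derive_scal _ _ (m/2) _ Dy1) (d_expc (m/2) y _ u Dy)))
       (d_expc (-2*m) y _ u Dy)) as D.
    simpl in D. eapply is_derive_eq; [exact D|].
    rewrite Ex. match goal with |- ?A = ?B => change (@eq R A B) end.
    unfold m. set (E1 := exp _). set (E2 := exp _). field.
  - intros u Hu. apply Rmult_le_pos; [left; apply Rmult_lt_0_compat; apply exp_pos|].
    assert (0 <= m^2 * y1 u ^2) by (apply Rmult_le_pos; apply pow2_ge_0 || (left; apply pow_lt; lra)).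
    assert (m * y2 u <= 0) by (pose proof (Hy2 u Hu); nra). lra.
  - apply endp; [exact Hsg| apply HA; exact Hi].
  - apply endp; [exact Hsg| apply HB; exact Hi]. }
pose proof (Hs 1 ltac:(ring) t Ht) as H1.
pose proof (Hs (-1) ltac:(ring) t Ht) as H2.
apply (exp_bound m (y t) (x i t)); lra.
Qed.
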